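(* Let $d\ge3$, $h\ge1$. The exponent $\exp(d,h)$ of $G(d,h)$ divides $$(d-1)^h\cdot\operatorname{lcm}\{d\,\theta(d,h+1),\ \theta(d,h),\ \theta(d,h-1),\dots,\theta(d,2)\},$$ where $\theta(d,n):=\frac{(d-1)^n-1}{d-2}$.
   Context: Let $\mathcal{T}(d,h)$ be the rooted tree in which the root $0$ has $d$ children, every vertex at distance $1,\dots,h-1$ from the root has $d-1$ children, and the vertices at distance $h$ are leaves. Let $V$ be its vertex set, $A$ its adjacency matrix, $\Delta := dI-A$, and $\Lambda\subset\mathbb{Z}^V$ the lattice spanned by the rows of $\Delta$. Then $G(d,h):=\mathbb{Z}^V/\Lambda$. The exponent is the least common multiple of the orders of the elements. *)

(* Defs.v *)
From HB Require Import structures.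
From mathcomp Require Import all_boot all_order all_algebra.
Set Implicit Arguments. Unset Strict Implicit. Unset Printing Implicit Defensive.
Import Order.TTheory GRing.Theory Num.Theory.

(* Raw vertices of T(d,h): a depth k <= h together with a path of k child
   indices (the vertex reached from the root 0 by following these choices). *)
Definition vraw (d h : nat) := {k : 'I_h.+1 & k.-tuple 'I_d}.
Definition vseq d h (x : vraw d h) : seq 'I_d := tagged x.

(* The root has d children (first index < d); every other internal vertex has
   d-1 children (later indices < d-1). *)
Definition vvalid d h (x : vraw d h) : bool :=
  all (fun i : 'I_d => (i < d.-1)%N) (behead (vseq x)).

Definition vert (d h : nat) := {x : vraw d h | vvalid x}.

Definition vpath d h (u : vert d h) : seq 'I_d := vseq (val u).

Definition is_child d h (u v : vert d h) : bool :=
  (size (vpath v) == (size (vpath u)).+1)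
  && (take (size (vpath u)) (vpath v) == vpath u).

Definition adj d h (u v : vert d h) : bool := is_child u v || is_child v u.

Local Open Scope ring_scope.

Definition Delta d h (u w : vert d h) : int :=
  (if u == w then (d%:Z) else 0) - (if adj u w then 1 else 0).

Definition in_lattice d h (x : vert d h -> int) : Prop :=
  exists c : vert d h -> int, forall w, x w = \sum_(u : vert d h) c u * Delta u w.

Definition nscale d h (n : nat) (x : vert d h -> int) : vert d h -> int :=
  fun w => n%:Z * x w.

(* n is the order of the class of x in G(d,h) = Z^V / Lambda
   (n = 0 encodes infinite order). *)
Definition is_order d h (x : vert d h -> int) (n : nat) : Prop :=
  ((0 < n)%N /\ in_lattice (nscale n x) /\
     forall m : nat, (0 < m)%N -> in_lattice (nscale m x) -> (n <= m)%N)
  \/ (n = 0%N /\ forall m : nat, (0 < m)%N -> ~ in_lattice (nscale m x)).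

Definition is_exponent d h (e : nat) : Prop :=
  (forall (x : vert d h -> int) n, is_order x n -> (n %| e)%N) /\
  (forall m : nat, (forall (x : vert d h -> int) n, is_order x n -> (n %| m)%N) ->
     (e %| m)%N).

Local Close Scope ring_scope.

(* theta(d,n) = ((d-1)^n - 1)/(d-2)  (exact division for d >= 3) *)
Definition theta (d n : nat) : nat := ((d.-1) ^ n - 1) %/ (d - 2).

Definition exp_bound (d h : nat) : nat :=
  (d.-1) ^ h * lcmn (d * theta d h.+1) (\big[lcmn/1%N]_(2 <= k < h.+1) theta d k).

(* Main.v *)
Require Import Defs.
From mathcomp Require Import all_boot all_order all_algebra.
From mathcomp Require Import zify ring.
Set Implicit Arguments. Unset Strict Implicit. Unset Printing Implicit Defensive.
Import Order.TTheory GRing.Theory Num.Theory.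

Lemma theta_sum d a : 2 < d -> theta d a = \sum_(i < a) d.-1 ^ i.
Proof.
move=> hd; rewrite /theta.
rewrite subn1 predn_exp.
have -> : d.-1.-1 = d - 2 by lia.
rewrite mulKn; last by lia.
by [].
Qed.

Lemma theta_rec d a : 2 < d -> theta d a.+1 = d.-1 * theta d a + 1.
Proof.
move=> hd; rewrite !theta_sum // big_ord_recl /= expn0 big_distrr /= addnC.
by congr (_ + _); apply: eq_bigr => i _; rewrite expnS.
Qed.

Lemma theta0 d : theta d 0 = 0.
Proof. by rewrite /theta expn0 subnn div0n. Qed.

Lemma theta_pow d a : 2 < d -> (d - 2) * theta d a + 1 = d.-1 ^ a.
Proof.
move=> hd; elim: a => [|a IH]; first by rewrite theta0 muln0.
rewrite theta_rec // expnS -IH; lia.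
Qed.

Lemma theta_gt0 d a : 2 < d -> 0 < a -> 0 < theta d a.
Proof. by move=> hd; case: a => // a _; rewrite theta_rec // addn1. Qed.




Lemma PoszX (n k : nat) : Posz (n ^ k) = ((Posz n) ^+ k)%R.
Proof. by rewrite -!natz natrX. Qed.

Section QAlg.
Variables (d h M t : nat).
Hypothesis hd : (2 < d)%N.
Hypothesis ht : (t <= h)%N.
Hypothesis HM1 : forall a, (0 < a <= h.+1)%N -> (theta d a %| M)%N.
Hypothesis HM2 : (d * d.-1 ^ h * theta d h.+1 %| M)%N.
Local Open Scope ring_scope.

Definition T n : int := (theta d (h.+1 - n))%:Z.
Definition Y n : int := ((M %/ theta d (h.+1 - n))%N)%:Z.
Definition K : int := ((M %/ (d * d.-1 ^ h * theta d h.+1))%N)%:Z.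
Definition D j : int := T t * (Y j.+1 - (d.-1)%:Z * Y j).
Definition Q m : int := T t * K + \sum_(j < m) D j.

Lemma QS m : Q m.+1 = Q m + D m.
Proof. by rewrite /Q big_ord_recr /= addrA. Qed.

Lemma Trec n : (n <= h)%N -> T n = (d.-1)%:Z * T n.+1 + 1.
Proof.
move=> hn; rewrite /T.
have -> : (h.+1 - n = (h.+1 - n.+1).+1)%N by lia.
by rewrite theta_rec // PoszD PoszM.
Qed.

Lemma Th1 : T h.+1 = 0.
Proof. by rewrite /T subnn theta0. Qed.

Lemma YT n : (n <= h)%N -> Y n * T n = M%:Z.
Proof.
move=> hn; rewrite /Y /T -PoszM divnK //; apply: HM1; lia.
Qed.

Lemma dr : d%:Z = (d.-1)%:Z + 1.
Proof. rewrite -PoszD addn1 prednK //; lia. Qed.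

Lemma KT : K * (d%:Z * (d.-1)%:Z ^+ h * T 0) = M%:Z.
Proof.
rewrite /K /T subn0 -PoszX -!PoszM divnK //.
Qed.

Lemma T01 : T 0 - T 1 = (d.-1)%:Z ^+ h.
Proof.
rewrite /T subn0 subSS theta_rec // -PoszX -(theta_pow h hd).
have -> : (d.-1 = (d - 2) + 1)%N by lia.
rewrite subn0 !PoszD !PoszM PoszD; ring.
Qed.

Lemma eq_off n : (0 < n)%N -> (n <= h)%N ->
  d%:Z * T n - T n.-1 - (d.-1)%:Z * T n.+1 = 0.
Proof.
case: n => // k _ hk /=.
rewrite (Trec (ltnW hk)) (Trec hk) dr; ring.
Qed.

Lemma eq_path n : (0 < n)%N -> (n.+1 <= t)%N ->
  d%:Z * (Q n * T n) - Q n.-1 * T n.-1 - (d.-1)%:Z * (Q n * T n.+1)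
   - (Q n.+1 - Q n) * T n.+1 = 0.
Proof.
case: n => // k _ hk /=.
rewrite !QS.
have h0 : (k <= h)%N by lia.
have h1 : (k.+1 <= h)%N by lia.
have h2 : (k.+2 <= h)%N by lia.
have E : d%:Z * ((Q k + D k) * T k.+1) - Q k * T k -
  (d.-1)%:Z * ((Q k + D k) * T k.+2) - (Q k + D k + D k.+1 - (Q k + D k)) * T k.+2
  = T t * (d%:Z * (Y k.+1 * T k.+1) - (d.-1)%:Z * (Y k * T k) - Y k.+2 * T k.+2).
  rewrite /D (Trec h0) (Trec h1) dr; ring.
rewrite E !YT // dr; ring.
Qed.

Lemma KY : K * (d%:Z * (d.-1)%:Z ^+ h) = Y 0.
Proof.
rewrite /K /Y subn0 -PoszX -!PoszM; congr Posz.
have hA : (d * d.-1 ^ h %| M %/ theta d h.+1)%N.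
  rewrite dvdn_divRL //; apply: HM1; lia.
by rewrite [(d * _ * _)%N]mulnC divnMA divnK.
Qed.

Lemma eq_path0 : (0 < t)%N ->
  d%:Z * (Q 0 * T 0) - d%:Z * (Q 0 * T 1) - (Q 1 - Q 0) * T 1 = 0.
Proof.
move=> ht0.
rewrite QS.
have E : d%:Z * (Q 0 * T 0) - d%:Z * (Q 0 * T 1) - (Q 0 + D 0 - Q 0) * T 1
   = T t * (K * (d%:Z * (d.-1)%:Z ^+ h)) - D 0 * T 1.
  by rewrite /Q big_ord0 -T01; ring.
rewrite E KY /D.
have E2 : T t * Y 0 - T t * (Y 1 - (d.-1)%:Z * Y 0) * T 1 = T t * (Y 0 * T 0 - Y 1 * T 1).
  by rewrite (Trec (leq0n h)); ring.
rewrite E2 !YT //; last by lia.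
by rewrite subrr mulr0.
Qed.

Lemma eq_v : (0 < t)%N ->
  d%:Z * (Q t * T t) - Q t.-1 * T t.-1 - (d.-1)%:Z * (Q t * T t.+1) = M%:Z.
Proof.
move=> t0; have [k tk] : exists k, t = k.+1 by exists t.-1; lia.
have h0 : (k <= h)%N by lia.
have E : d%:Z * (Q t * T t) - Q t.-1 * T t.-1 - (d.-1)%:Z * (Q t * T t.+1)
   = (Y t * T t) * T k - (d.-1)%:Z * T t * (Y k * T k).
  have -> : Q t = Q k + D k by rewrite tk QS.
  have -> : t.-1 = k by rewrite tk.
  rewrite /D (Trec h0) -tk (Trec ht) dr; ring.
rewrite E !YT // (Trec h0) -tk; ring.
Qed.

Lemma eq_v0 : t = 0%N ->
  d%:Z * (Q 0 * T 0) - d%:Z * (Q 0 * T 1) = M%:Z.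
Proof.
move=> t0.
have E : d%:Z * (Q 0 * T 0) - d%:Z * (Q 0 * T 1) = T t * (K * (d%:Z * (d.-1)%:Z ^+ h)).
  by rewrite /Q big_ord0 -T01; ring.
rewrite E t0 -KT; ring.
Qed.
End QAlg.



Section Verts.
Variables (d h : nat).

Definition good (s : seq 'I_d) :=
  (size s <= h)%N && all (fun i : 'I_d => (i < d.-1)%N) (behead s).

Lemma vpath_good (u : vert d h) : good (vpath u).
Proof.
case: u => [[k tu] /= p]; rewrite /good /vpath /vseq /=.
rewrite size_tuple -ltnS ltn_ord /=. exact: p.
Qed.

Lemma vpath_inj : injective (@vpath d h).
Proof.
case=> [[k1 t1] p1] [[k2 t2] p2]; rewrite /vpath /vseq /= => e.
have ek : k1 = k2 by apply: val_inj; rewrite /= -(size_tuple t1) -(size_tuple t2) e.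
subst k2.
have et : t1 = t2 by apply: val_inj.
subst t2. congr exist. exact: bool_irrelevance.
Qed.

Lemma good_ex s : good s -> exists u : vert d h, vpath u = s.
Proof.
case/andP => hs ha.
have hk : (size s < h.+1)%N by [].
exists (exist _ (existT (fun k : 'I_h.+1 => k.-tuple 'I_d) (Ordinal hk) (in_tuple s)) ha).
by [].
Qed.

Local Open Scope ring_scope.

Lemma sum_at (F : seq 'I_d -> int) s :
  \sum_(u : vert d h) (if vpath u == s then F (vpath u) else 0) = if good s then F s else 0.
Proof.
case: ifP => gs.
  have [u0 hu0] := good_ex gs.
  rewrite (bigD1 u0) //= hu0 eqxx big1 ?addr0 // => u hu.
  case: eqP => // e; case/eqP: hu; apply: vpath_inj; by rewrite e hu0.
rewrite big1 // => u _; case: eqP => // e.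
by move: (vpath_good u); rewrite e gs.
Qed.

Lemma good_rcons s i : good (rcons s i) =
  [&& (size s < h)%N, all (fun i : 'I_d => (i < d.-1)%N) (behead s) & (s == [::]) || (i < d.-1)%N].
Proof.
rewrite /good size_rcons; case: s => [|x s] //=.
by rewrite all_rcons (andbC (i < d.-1)%N).
Qed.

Lemma good_rcons_l s i : good (rcons s i) -> good s.
Proof. by rewrite good_rcons /good => /and3P [/ltnW -> ->]. Qed.

Lemma is_child_par (u w : vert d h) p i : vpath w = rcons p i ->
  is_child u w = (vpath u == p).
Proof.
move=> hw; rewrite /is_child hw size_rcons eqSS.
case: eqP => [e|ne] /=.
  by rewrite -e -cats1 take_size_cat.
by apply/esym/eqP => e; apply: ne; rewrite e.
Qed.

Lemma is_child_nil (u w : vert d h) : vpath w = [::] -> is_child u w = false.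
Proof. by move=> hw; rewrite /is_child hw. Qed.

Lemma is_child_ch (u w : vert d h) :
  is_child w u = [exists i : 'I_d, vpath u == rcons (vpath w) i].
Proof.
rewrite /is_child; apply/andP/existsP.
  case=> /eqP hs /eqP ht.
  case/lastP: (vpath u) hs ht => [|p j] //; rewrite size_rcons => /eqP; rewrite eqSS => /eqP hs.
  rewrite -hs -cats1 take_size_cat // => e; exists j; by rewrite e cats1.
case=> i /eqP ->; rewrite size_rcons eqxx; split=> //.
by rewrite -cats1 take_size_cat.
Qed.

Lemma adj_sum (F : seq 'I_d -> int) (w : vert d h) :
  \sum_(u : vert d h) (if adj u w then F (vpath u) else 0) =
  (if vpath w is [::] then 0 else F (take (size (vpath w)).-1 (vpath w)))
  + \sum_(i : 'I_d) (if good (rcons (vpath w) i) then F (rcons (vpath w) i) else 0).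
Proof.
have split1 : forall u : vert d h, (if adj u w then F (vpath u) else 0) =
   (if is_child u w then F (vpath u) else 0) + (if is_child w u then F (vpath u) else 0).
  move=> u; rewrite /adj; case h1: (is_child u w); case h2: (is_child w u) => /=; rewrite ?addr0 ?add0r //.
  move: h1 h2; rewrite /is_child => /andP [/eqP a _] /andP [/eqP b _].
  by move: a; rewrite b; lia.
rewrite (eq_bigr _ (fun u _ => split1 u)) big_split /=; congr (_ + _).
  case/lastP e: (vpath w) => [|p i].
    by rewrite big1 // => u _; rewrite is_child_nil.
  have -> : take (size (rcons p i)).-1 (rcons p i) = p.
    by rewrite size_rcons /= -cats1 take_size_cat.
  have -> : (if rcons p i is [::] then 0 else F p) = F p by case: (p).
  have gp : good p by apply: (@good_rcons_l p i); rewrite -e vpath_good.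
  have := sum_at F p; rewrite gp => <-; apply: eq_bigr => u _; rewrite (is_child_par _ e).
  by [].
rewrite (eq_bigr (fun u => \sum_(i : 'I_d) (if vpath u == rcons (vpath w) i then F (vpath u) else 0))).
  rewrite exchange_big /=; apply: eq_bigr => i _; exact: sum_at.
move=> u _; rewrite is_child_ch.
case: existsP => [[j /eqP hj]|hn].
  rewrite (bigD1 j) //= hj eqxx big1 ?addr0 // => k hk.
  by rewrite eqseq_rcons eqxx /= eq_sym (negbTE hk).
by rewrite big1 // => k _; case: eqP => // e; case: hn; exists k; apply/eqP.
Qed.

End Verts.



Local Open Scope ring_scope.


Lemma sum_Delta d h (c : vert d h -> int) (w : vert d h) :
  \sum_(u : vert d h) c u * Delta u w =
  (d%:Z) * c w - \sum_(u : vert d h) (if adj u w then c u else 0).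
Proof.
rewrite /Delta.
have E : forall u, c u * ((if u == w then d%:Z else 0) - (if adj u w then 1 else 0))
   = (if u == w then c u * d%:Z else 0) - (if adj u w then c u else 0).
  move=> u; case: (u == w); case: (adj u w); rewrite ?mulr0 ?mulr1 ?subr0 ?sub0r ?mulrN; ring.
rewrite (eq_bigr _ (fun u _ => E u)) sumrB; congr (_ - _).
rewrite -big_mkcond big_pred1_eq mulrC //.
Qed.

Lemma count_sum d (s : seq 'I_d) (a : int) : (0 < d)%N ->
  \sum_(i : 'I_d) (if (s == [::]) || (i < d.-1)%N then a else 0) =
  (if s == [::] then d%:Z else (d.-1)%:Z) * a.
Proof.
move=> d0; case: eqP => _ /=.
  by rewrite sumr_const card_ord -mulr_natl natz.
rewrite -(big_mkord xpredT (fun k => if (k < d.-1)%N then a else 0)).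
have hd1 : (d.-1 <= d)%N by lia.
rewrite (big_cat_nat (n := d.-1)) //=.
have -> : \sum_(d.-1 <= i < d) (if (i < d.-1)%N then a else 0) = 0.
  rewrite big_nat_cond big1 // => k /andP [/andP [hk _] _]; by rewrite ltnNge hk.
rewrite addr0 big_nat_cond (eq_bigr (fun _ => a)); last first.
  by move=> k /andP [/andP [_ ->] _].
by rewrite -big_nat_cond sumr_const_nat subn0 -mulr_natl natz.
Qed.

Section Lcp.
Variable T : eqType.
Fixpoint lcp (s t : seq T) : nat :=
  if s is x :: s' then (if t is y :: t' then (if x == y then (lcp s' t').+1 else 0%N) else 0%N) else 0%N.

Lemma lcp_le_l s t : (lcp s t <= size s)%N.
Proof. elim: s t => [|x s IH] [|y t] //=; case: eqP => // _; exact: IH. Qed.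

Lemma lcp_le_r s t : (lcp s t <= size t)%N.
Proof. elim: s t => [|x s IH] [|y t] //=; case: eqP => // _; exact: IH. Qed.

Lemma lcp_eq s t : (s == t) = (lcp s t == size s) && (size s == size t).
Proof.
elim: s t => [|x s IH] [|y t] //=.
rewrite eqseq_cons; case: (x == y) => //=; rewrite !eqSS; exact: IH.
Qed.

Lemma lcp_rcons s t i : lcp (rcons s i) t =
  if [&& lcp s t == size s, (size s < size t)%N & i == nth i t (size s)]
  then (size s).+1 else lcp s t.
Proof.
elim: s t => [|x s IH] [|y t] //=.
case: (x == y) => //=; rewrite IH eqSS ltnS.
by case: ifP.
Qed.
End Lcp.


Local Close Scope ring_scope.


Local Open Scope ring_scope.

Section Main.
Variables (d h M : nat) (v : vert d h).
Hypothesis hd : (2 < d)%N.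
Hypothesis HM1 : forall a, (0 < a <= h.+1)%N -> (theta d a %| M)%N.
Hypothesis HM2 : (d * d.-1 ^ h * theta d h.+1 %| M)%N.

Let pv := vpath v.
Let t := size pv.
Lemma ht : (t <= h)%N.
Proof. by have /andP [] := vpath_good v. Qed.

Definition F (s : seq 'I_d) : int := Q d h M t (lcp s pv) * T d h (size s).

Lemma Th1' : T d h h.+1 = 0.
Proof. by rewrite /T subnn theta0. Qed.

Lemma children_sum s : good h s ->
  \sum_(i : 'I_d) (if good h (rcons s i) then F (rcons s i) else 0) =
  (if s == [::] then d%:Z else (d.-1)%:Z) * (Q d h M t (lcp s pv) * T d h (size s).+1)
  + (if (lcp s pv == size s) && (size s < t)%N
     then (Q d h M t (size s).+1 - Q d h M t (size s)) * T d h (size s).+1 else 0).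
Proof.
move=> gs; have /andP [hsz hall] := gs.
case: (ltnP (size s) h) => hn; last first.
  have e : size s = h by apply/eqP; rewrite eqn_leq hsz hn.
  rewrite big1; last by move=> i _; rewrite good_rcons ltnNge hn.
  rewrite e Th1' !mulr0 add0r.
  case: ifP => // /andP [_ ht']; have := ht; rewrite /t; lia.
have E1 : forall i, good h (rcons s i) = (s == [::]) || (i < d.-1)%N.
  by move=> i; rewrite good_rcons hn hall.
under eq_bigr => i _ do rewrite E1 /F size_rcons lcp_rcons.
under eq_bigr => i _ do rewrite andbA.
case Hc: ((lcp s pv == size s) && (size s < t)%N); last first.
  rewrite addr0 -count_sum; last by lia.
  by apply: eq_bigr => i _.
move/andP: Hc => [/eqP Hm Hnt].
have z : 'I_d by exists 0%N; lia.
set i0 := nth z pv (size s).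
have E2 : forall i : 'I_d, (i == nth i pv (size s)) = (i == i0).
  by move=> i; rewrite /i0 (set_nth_default z).
have Pi0 : (s == [::]) || (i0 < d.-1)%N.
  case Es: (s == [::]) => //=.
  have s0 : (0 < size s)%N by rewrite lt0n size_eq0 Es.
  have /andP [_ gv] := vpath_good v.
  rewrite /i0 -(prednK s0) -nth_behead; apply: (all_nthP z gv).
  rewrite size_behead -/pv -/t; lia.
pose X := (Q d h M t (size s).+1 - Q d h M t (size s)) * T d h (size s).+1.
rewrite (eq_bigr (fun i : 'I_d => (if (s == [::]) || (i < d.-1)%N then Q d h M t (size s) * T d h (size s).+1 else 0)
   + (if i == i0 then X else 0))); last first.
  move=> i _; rewrite E2 /=; case: (i =P i0) => [->|ne].
    rewrite Pi0 /X; ring.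
  by rewrite addr0 Hm.
rewrite big_split /= count_sum; last by lia.
by rewrite -big_mkcond big_pred1_eq Hm.
Qed.

Lemma main_eq (w : vert d h) :
  \sum_(u : vert d h) F (vpath u) * Delta u w = if w == v then M%:Z else 0.
Proof.
rewrite sum_Delta (adj_sum F w) (children_sum (vpath_good w)).
have -> : (w == v) = (vpath w == pv) by apply/eqP/eqP => [->|/vpath_inj] //.
move: (vpath w) (vpath_good w) => s gs.
case/lastP: s gs => [|p i] gs.
  rewrite /F /=.
  case: (posnP t) => t0.
    have pv0 : pv = [::] by apply/eqP; rewrite -size_eq0 -/t t0.
    rewrite pv0 eqxx /= -(eq_v0 hd ht HM2 t0); ring.
  have -> : ([::] == pv) = false by apply/negbTE; rewrite eq_sym -size_eq0 -/t -lt0n t0.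
  rewrite -[RHS](eq_path0 hd ht HM1 HM2 t0); ring.
have -> : take (size (rcons p i)).-1 (rcons p i) = p.
  by rewrite size_rcons /= -cats1 take_size_cat.
have -> : (if rcons p i is [::] then 0 else F p) = F p by case: (p).
have -> : (rcons p i == [::]) = false by rewrite -size_eq0 size_rcons.
have hnh : (size p < h)%N by move: gs; rewrite /good size_rcons => /andP [].
rewrite lcp_eq /F !size_rcons lcp_rcons.
have hmp := lcp_le_l p pv.
case Hc: [&& lcp p pv == size p, (size p < t)%N & i == nth i pv (size p)].
  move/and3P: Hc => [/eqP Hm Hnt _].
  rewrite eqxx /= Hm.
  case: (ltngtP (size p).+1 t) => Ht.
  - rewrite -[RHS](eq_path hd ht HM1 HM2 (n := (size p).+1)) //=; ring.
  - lia.
  - have := eq_v hd ht HM1 HM2; rewrite -Ht /= => <- //; ring.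
have -> : (lcp p pv == (size p).+1) = false by apply/negbTE; rewrite neq_ltn ltnS hmp.
rewrite /= addr0.
have := eq_off hd ht HM2 (n := (size p).+1) (ltn0Sn _) hnh => /= E.
rewrite -[RHS](mulr0 (Q d h M t (lcp p pv))) -E; ring.
Qed.
End Main.

Local Close Scope ring_scope.


Local Open Scope ring_scope.

Lemma lattice_all d h M (hd : (2 < d)%N)
  (HM1 : forall a, (0 < a <= h.+1)%N -> (theta d a %| M)%N)
  (HM2 : (d * d.-1 ^ h * theta d h.+1 %| M)%N)
  (x : vert d h -> int) : in_lattice (nscale M x).
Proof.
exists (fun u => \sum_(v : vert d h) x v * F M v (vpath u)) => w.
rewrite /nscale.
under eq_bigr => u _ do rewrite mulr_suml.
rewrite exchange_big /=.
under eq_bigr => v _ do (under eq_bigr => u _ do rewrite -mulrA; rewrite -mulr_sumr (main_eq v hd HM1 HM2)).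
rewrite (bigD1 w) // eqxx big1; first by rewrite /= addr0 mulrC.
by move=> v hv; rewrite eq_sym (negbTE hv) mulr0.
Qed.

Local Close Scope ring_scope.

Lemma lattice_mod d h (x : vert d h -> int) M n :
  in_lattice (nscale M x) -> in_lattice (nscale n x) -> in_lattice (nscale (M %% n) x).
Proof.
move=> [cM hM] [cn hn].
exists (fun u => (cM u - (M %/ n)%:Z * cn u)%R) => w.
rewrite /nscale.
under eq_bigr => u _ do rewrite mulrBl -mulrA.
rewrite sumrB -mulr_sumr -hM -hn /nscale.
have := divn_eq M n => /(congr1 Posz); rewrite PoszD PoszM => E.
rewrite E; ring.
Qed.

Unset Implicit Arguments.
Theorem proposition7p5 (d h : nat) (hd : (3 <= d)%N) (hh : (1 <= h)%N)
  (e : nat) (he : is_exponent d h e) :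
  (e %| exp_bound d h)%N.
Proof.
set M := exp_bound d h.
have hd' : (2 < d)%N by [].
have th1 : theta d 1 = 1 by rewrite theta_rec // theta0 muln0.
have HM2 : (d * d.-1 ^ h * theta d h.+1 %| M)%N.
  rewrite /M /exp_bound (mulnC d) -mulnA.
  by apply: dvdn_mul => //; apply: dvdn_lcml.
have HM1 : forall a, (0 < a <= h.+1)%N -> (theta d a %| M)%N.
  move=> a /andP [a0 ah].
  case: (ltngtP a 1) => [|a1|ea]; [lia| |by subst a; rewrite th1].
  case: (ltngtP a h.+1) => [ah'|ah'|ea]; last first.
    subst a; apply: dvdn_trans HM2; exact: dvdn_mull.
    lia.
    rewrite /M /exp_bound; apply: dvdn_mull; apply: dvdn_trans (dvdn_lcmr _ _).
    rewrite (bigD1_seq a) /=; first exact: dvdn_lcml.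
      by rewrite mem_index_iota; lia.
    exact: iota_uniq.
have Mpos : (0 < M)%N.
  rewrite /M /exp_bound muln_gt0 expn_gt0 (_ : 0 < d.-1)%N /=; last lia.
  rewrite lcmn_gt0 muln_gt0 theta_gt0 // (_ : 0 < d)%N /=; last lia.
  rewrite big_seq_cond.
  elim/big_ind: _ => //; first by move=> a b a0 b0; rewrite lcmn_gt0 a0 b0.
  move=> k /andP [hk _]; apply: theta_gt0 => //; move: hk; rewrite mem_index_iota; lia.
apply: he.2 => x n [[n0 [hn hmin]] | [-> hno]].
  have hx := lattice_all hd' HM1 HM2 x.
  have hr := lattice_mod hx hn.
  case: (posnP (M %% n)) => [/eqP|r0]; first by rewrite -/(dvdn n M).
  have := hmin _ r0 hr; rewrite leqNgt ltn_mod n0 //.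
by case: (hno M Mpos); apply: lattice_all.
Qed.
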